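(* Let $M, N \geq 1$ be integers and let $\phi_1(x), \ldots, \phi_{MN}(x)$ be sufficiently differentiable $N$-vector valued functions of $x$. Let $\Phi$ be the $MN \times MN$ block Wronskian matrix $$\Phi=\begin{pmatrix} \phi_1&\phi_2&\cdots&\phi_{MN}\\ \phi_1'&\phi_2'&\cdots&\phi_{MN}'\\ \vdots&\vdots&\ddots&\vdots\\ \phi_1^{(M-1)}&\phi_2^{(M-1)}&\cdots&\phi_{MN}^{(M-1)} \end{pmatrix},$$ whose first $N$ rows are the columns $\phi_i$ and every other entry is the derivative of the entry $N$ rows above it. Suppose $\det \Phi \neq 0$, so that $\Phi^{-1}$ is defined. Let $C_0, \ldots, C_{M-1}$ be the $N\times N$ matrix functions defined by the block decomposition $$(C_0\ C_1\ \cdots\ C_{M-1}) = \left(\phi_1^{(M)}\ \cdots\ \phi_{MN}^{(M)}\right)\Phi^{-1},$$ and define the matrix differential operator $$K = I\,\partial^M - \sum_{j=0}^{M-1} C_j(x)\,\partial^j,$$ which is written in matrix notation as $K=I\,\partial^M-\left(\phi_1^{(M)}\ \cdots\ \phi_{MN}^{(M)}\right)\Phi^{-1}\begin{pmatrix} I\\ \partial I\\ \vdots\\ \partial^{M-1}I\end{pmatrix}$. Then: (a) $K$ is the unique monic MODO of order $M$ such that $K(\phi_i) = 0$ for all $1 \leq i \leq MN$. (b) If $L$ is any MODO such that $L(\phi_i) = 0$ for all $1 \leq i \leq MN$, then there exists a MODO $Q$ such that $L = Q \circ K$.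
   Context: All functions are assumed to be sufficiently differentiable functions of $x$. A matrix coefficient ordinary differential operator (MODO) is a polynomial $L=\sum_{i=0}^n \alpha_i(x)\partial^i$ in $\partial$ whose coefficients $\alpha_i(x)$ are $N\times N$ matrix-valued functions of $x$. Such an operator acts on an $N$-vector valued function $f$ by $L(f)=\sum_{i=0}^n \alpha_i(x) f^{(i)}(x)$, with matrix-vector products. MODOs are added coefficientwise. They are multiplied by extending linearly the rule $$\left(\alpha(x)\partial^m\right)\circ\left(\beta(x)\partial^n\right)=\sum_{i=0}^m \binom{m}{i}\alpha(x)\beta^{(i)}(x)\partial^{m+n-i},$$ in which the products of coefficients are matrix products. With this rule, $(L\circ Q)(f) = L(Q(f))$. The order of a MODO is the highest power of $\partial$ that appears with a nonzero coefficient. A MODO of order $M$ is monic if its coefficient of $\partial^M$ is the $N\times N$ identity matrix $I$. The symbol $0$ in $L(\phi_i)=0$ denotes the zero vector. *)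

(* Defs.v *)
From HB Require Import structures.
From mathcomp Require Import all_boot all_order all_algebra.
From mathcomp Require Import all_classical all_reals all_analysis.
Set Implicit Arguments. Unset Strict Implicit. Unset Printing Implicit Defensive.
Import Order.TTheory GRing.Theory Num.Theory.
Import numFieldNormedType.Exports.
Local Open Scope ring_scope.

Section Defs.
Variable R : realType.

Definition dn (n : nat) (f : R -> R) : R -> R := derive1n n f.

(* "sufficiently differentiable": infinitely differentiable on R *)
Definition smooth (f : R -> R) : Prop := forall n x, derivable (dn n f) x 1.

Definition mxdn (p q : nat) (n : nat) (A : R -> 'M[R]_(p, q)) : R -> 'M[R]_(p, q) :=
  fun x => \matrix_(i, j) dn n (fun y => A y i j) x.

Definition mx_smooth (p q : nat) (A : R -> 'M[R]_(p, q)) : Prop :=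
  forall i j, smooth (fun y => A y i j).

(* entry of a matrix at natural-number indices (0 outside the range) *)
Definition mxent (p q : nat) (A : 'M[R]_(p, q)) (a b : nat) : R :=
  match @insub _ (fun k => k < p)%N 'I_p a, @insub _ (fun k => k < q)%N 'I_q b with
  | Some i, Some j => A i j
  | _, _ => 0
  end.

(* A matrix coefficient ordinary differential operator (MODO) of size N:
   the list of its coefficients alpha_0, alpha_1, ..., alpha_n
   (L = sum_i alpha_i(x) d^i); trailing zero coefficients are allowed. *)
Definition modo (N : nat) := seq (R -> 'M[R]_N).

Definition coef (N : nat) (L : modo N) (i : nat) : R -> 'M[R]_N :=
  nth (fun _ => 0) L i.

Definition modo_eq (N : nat) (L1 L2 : modo N) : Prop :=
  forall i x, coef L1 i x = coef L2 i x.

Definition modo_smooth (N : nat) (L : modo N) : Prop :=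
  forall i, mx_smooth (coef L i).

Definition monic_of_order (N : nat) (M : nat) (L : modo N) : Prop :=
  (forall x, coef L M x = 1%:M) /\ (forall i x, (M < i)%N -> coef L i x = 0).

Definition modo_apply (N : nat) (L : modo N) (f : R -> 'cV[R]_N) : R -> 'cV[R]_N :=
  fun x => \sum_(i < size L) coef L i x *m mxdn i f x.

(* product: (a d^m)(b d^n) = sum_{i<=m} binom(m,i) a b^(i) d^(m+n-i) *)
Definition modo_mul (N : nat) (L Q : modo N) : modo N :=
  mkseq (fun k => fun x =>
    \sum_(m < size L) \sum_(n < size Q) \sum_(i < m.+1)
       if (m + n - i == k)%N then
         ('C(m, i))%:R *: (coef L m x *m mxdn i (coef Q n) x)
       else 0) (size L + size Q).

Definition wronsk (M N : nat) (phi : 'I_(M * N) -> R -> 'cV[R]_N) (x : R)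
  : 'M[R]_(M * N) :=
  \matrix_(r, i) mxent (mxdn (r %/ N) (phi i) x) (r %% N) 0.

Definition wronsk_top (M N : nat) (phi : 'I_(M * N) -> R -> 'cV[R]_N) (x : R)
  : 'M[R]_(N, M * N) :=
  \matrix_(a, i) mxdn M (phi i) x a 0.

(* (C_0 ... C_{M-1}) = (phi^(M)) Phi^{-1};  C_j is the j-th N x N block *)
Definition Ccoef (M N : nat) (phi : 'I_(M * N) -> R -> 'cV[R]_N) (j : nat)
  : R -> 'M[R]_N :=
  fun x => \matrix_(a, b)
    mxent (wronsk_top phi x *m invmx (wronsk phi x)) a (j * N + b).

Definition Kop (M N : nat) (phi : 'I_(M * N) -> R -> 'cV[R]_N) : modo N :=
  rcons (mkseq (fun j => fun x => - Ccoef phi j x) M) (fun _ => 1%:M).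

End Defs.

(* Main.v *)
Require Import Defs.
From HB Require Import structures.
From mathcomp Require Import all_boot all_order all_algebra.
From mathcomp Require Import all_classical all_reals all_analysis.
From mathcomp Require Import zify.
Import Order.TTheory GRing.Theory Num.Theory.
Import numFieldNormedType.Exports.
Local Open Scope ring_scope.
Set Implicit Arguments. Unset Strict Implicit. Unset Printing Implicit Defensive.

Section Scal.
Variable R : realType.
Implicit Types f g : R -> R.

Lemma der1D f g x : derivable f x 1 -> derivable g x 1 ->
  derive1 (fun y => f y + g y) x = derive1 f x + derive1 g x.
Proof. by move=> hf hg; rewrite !derive1E; exact: (deriveD hf hg). Qed.

Lemma der1M f g x : derivable f x 1 -> derivable g x 1 ->
  derive1 (fun y => f y * g y) x = f x * derive1 g x + g x * derive1 f x.
Proof. by move=> hf hg; rewrite !derive1E; exact: (deriveM hf hg). Qed.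

Lemma dblD f g x : derivable f x 1 -> derivable g x 1 ->
  derivable (fun y => f y + g y) x 1.
Proof. by move=> hf hg; exact: (derivableD hf hg). Qed.

Lemma dblM f g x : derivable f x 1 -> derivable g x 1 ->
  derivable (fun y => f y * g y) x 1.
Proof. by move=> hf hg; exact: (derivableM hf hg). Qed.

Lemma der1C (c : R) : derive1 (fun _ : R => c) = fun _ => 0.
Proof. by apply/funext => x; rewrite derive1_cst. Qed.

Lemma der1V f x : f x != 0 -> derivable f x 1 ->
  derive1 (fun y => (f y)^-1) x = - (f x) ^- 2 * derive1 f x.
Proof. by move=> h1 h2; rewrite !derive1E; exact: deriveV. Qed.

Lemma smooth_dbl f x : smooth f -> derivable f x 1.
Proof. by move=> h; exact: (h 0%N x). Qed.

Lemma dnS f n : dn n.+1 f = dn n (derive1 f).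
Proof. by rewrite /dn derive1Sn. Qed.

Lemma dnS' f n : dn n.+1 f = derive1 (dn n f).
Proof. by rewrite /dn derive1nS. Qed.

Lemma dn_dn f m n : dn m (dn n f) = dn (m + n) f.
Proof. by rewrite /dn /derive1n iterD. Qed.

Lemma smooth_der f : smooth f -> smooth (derive1 f).
Proof. by move=> h n x; rewrite -dnS; exact: h. Qed.

Lemma smooth_dn f k : smooth f -> smooth (dn k f).
Proof. by move=> h n x; rewrite dn_dn; exact: h. Qed.

Lemma smooth_intro (P : (R -> R) -> Prop) :
  (forall f, P f -> (forall x, derivable f x 1) /\ P (derive1 f)) ->
  forall f, P f -> smooth f.
Proof.
move=> hP f Pf n; elim: n f Pf => [|n IH] f Pf x; first by case: (hP f Pf).
rewrite dnS; apply: IH; by case: (hP f Pf).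
Qed.

Inductive alg (B : (R -> R) -> Prop) : (R -> R) -> Prop :=
| alg_base f : B f -> alg B f
| alg_cst (c : R) : alg B (fun _ => c)
| alg_add f g : alg B f -> alg B g -> alg B (fun y => f y + g y)
| alg_mul f g : alg B f -> alg B g -> alg B (fun y => f y * g y).

Lemma alg_ind' (B : (R -> R) -> Prop) :
  (forall f, B f -> (forall x, derivable f x 1) /\ alg B (derive1 f)) ->
  forall f, alg B f -> (forall x, derivable f x 1) /\ alg B (derive1 f).
Proof.
move=> hB f; elim => {f}.
- by move=> f /hB.
- move=> c; split; first by move=> x; exact: derivable_cst.
  by rewrite der1C; exact: alg_cst.
- move=> f g _ [df af] _ [dg ag]; split; first by move=> x; exact: dblD.
  have -> : derive1 (fun y => f y + g y) = fun y => derive1 f y + derive1 g y.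
    by apply/funext => x; rewrite der1D.
  exact: alg_add.
- move=> f g hf [df af] hg [dg ag]; split; first by move=> x; exact: dblM.
  have -> : derive1 (fun y => f y * g y) =
     fun y => f y * derive1 g y + g y * derive1 f y.
    by apply/funext => x; rewrite der1M.
  by apply: alg_add; apply: alg_mul.
Qed.

Definition Bsm (f : R -> R) : Prop := smooth f \/
  exists g, smooth g /\ (forall x, g x != 0) /\ f = fun x => (g x)^-1.

Lemma alg_smooth f : alg Bsm f -> smooth f.
Proof.
apply: smooth_intro; apply: alg_ind' => h [hf|[g [sg [g0 ->]]]].
  split; first by move=> x; exact: smooth_dbl.
  by apply: alg_base; left; exact: smooth_der.
split; first by move=> x; apply: derivableV => //; exact: smooth_dbl.
have -> : derive1 (fun y => (g y)^-1) =
  fun y => (fun _ => -1) y * ((fun y => (g y)^-1) y * (fun y => (g y)^-1) y * derive1 g y).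
  apply/funext => x; rewrite der1V //; last exact: smooth_dbl.
  by rewrite mulN1r mulNr -exprVn expr2.
apply: alg_mul; first exact: alg_cst.
apply: alg_mul; last by apply: alg_base; left; exact: smooth_der.
by apply: alg_mul; apply: alg_base; right; exists g.
Qed.

Lemma smooth_alg f : smooth f -> alg Bsm f.
Proof. by move=> h; apply: alg_base; left. Qed.

Lemma smoothC (c : R) : smooth (fun _ => c).
Proof. by apply: alg_smooth; exact: alg_cst. Qed.

Lemma smoothD f g : smooth f -> smooth g -> smooth (fun y => f y + g y).
Proof. by move=> hf hg; apply: alg_smooth; apply: alg_add; exact: smooth_alg. Qed.

Lemma smoothM f g : smooth f -> smooth g -> smooth (fun y => f y * g y).
Proof. by move=> hf hg; apply: alg_smooth; apply: alg_mul; exact: smooth_alg. Qed.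

Lemma smoothN f : smooth f -> smooth (fun y => - f y).
Proof.
move=> hf; have -> : (fun y => - f y) = fun y => (fun _ => -1) y * f y.
  by apply/funext => y; rewrite mulN1r.
by apply: smoothM => //; exact: smoothC.
Qed.

Lemma smoothV f : smooth f -> (forall x, f x != 0) -> smooth (fun y => (f y)^-1).
Proof. by move=> hf h0; apply: alg_smooth; apply: alg_base; right; exists f. Qed.

Lemma smooth_sum (I : Type) (r : seq I) (P : pred I) (F : I -> R -> R) :
  (forall i, smooth (F i)) -> smooth (fun y => \sum_(i <- r | P i) F i y).
Proof.
move=> hF; elim: r => [|a r IH].
  by under eq_fun do rewrite big_nil; exact: smoothC.
under eq_fun do rewrite big_cons; case: (P a) => //; exact: smoothD.
Qed.

Lemma smooth_prod (I : Type) (r : seq I) (P : pred I) (F : I -> R -> R) :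
  (forall i, smooth (F i)) -> smooth (fun y => \prod_(i <- r | P i) F i y).
Proof.
move=> hF; elim: r => [|a r IH].
  by under eq_fun do rewrite big_nil; exact: smoothC.
under eq_fun do rewrite big_cons; case: (P a) => //; exact: smoothM.
Qed.
End Scal.

Section Scal2.
Variable R : realType.
Implicit Types f g : R -> R.
Lemma pascaln (a b : nat -> R) m :
  \sum_(0 <= i < m.+1) ('C(m, i))%:R * (a i * b (m - i)%N.+1 + a i.+1 * b (m - i)%N) =
  \sum_(0 <= i < m.+2) ('C(m.+1, i))%:R * (a i * b (m.+1 - i)%N).
Proof.
rewrite [RHS]big_nat_recl // bin0 mul1r subn0.
under [X in _ = _ + X]eq_bigr => i _ do
  rewrite binS natrD mulrDl subSS.
rewrite big_split addrA.
under [LHS]eq_bigr => i _ do rewrite mulrDr.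
rewrite big_split; congr (_ + _).
rewrite big_nat_recl // bin0 mul1r subn0 big_nat_recr //= bin_small // mulr0n mul0r addr0.
congr (_ + _); rewrite !big_nat; apply: eq_bigr => i /andP[_ hi].
by have -> : (m - i.+1).+1 = (m - i)%N by lia.
Qed.

Lemma pascal (a b : nat -> R) m :
  \sum_(i < m.+1) ('C(m, i))%:R * (a i * b (m - i)%N.+1 + a i.+1 * b (m - i)%N) =
  \sum_(i < m.+2) ('C(m.+1, i))%:R * (a i * b (m.+1 - i)%N).
Proof.
by move: (pascaln a b m); rewrite !big_mkord. 
Qed.

Lemma dbl_sum (I : Type) (r : seq I) (P : pred I) (F : I -> R -> R) x :
  (forall i, derivable (F i) x 1) -> derivable (fun y => \sum_(i <- r | P i) F i y) x 1.
Proof.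
move=> hF; elim: r => [|a r IH].
  under eq_fun do rewrite big_nil; exact: derivable_cst.
under eq_fun do rewrite big_cons; case: (P a) => //; exact: dblD.
Qed.

Lemma der1_sum (I : Type) (r : seq I) (P : pred I) (F : I -> R -> R) :
  (forall i x, derivable (F i) x 1) ->
  derive1 (fun y => \sum_(i <- r | P i) F i y) = fun y => \sum_(i <- r | P i) derive1 (F i) y.
Proof.
move=> hF; apply/funext => x; elim: r => [|a r IH].
  by under eq_fun do rewrite big_nil; rewrite der1C big_nil.
under eq_fun do rewrite big_cons; rewrite big_cons; case: (P a) => //.
by rewrite der1D ?IH //; apply: dbl_sum.
Qed.

Lemma dn_sum (I : Type) (r : seq I) (P : pred I) (F : I -> R -> R) m :
  (forall i, smooth (F i)) ->
  dn m (fun y => \sum_(i <- r | P i) F i y) = fun y => \sum_(i <- r | P i) dn m (F i) y.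
Proof.
move=> hF; elim: m => [|m IH] //.
rewrite dnS' IH der1_sum; last by move=> i x; apply: smooth_dbl; apply: smooth_dn.
by apply/funext => y; apply: eq_bigr => i _; rewrite dnS'.
Qed.

Lemma dn_mul f g m : smooth f -> smooth g ->
  dn m (fun y => f y * g y) =
  fun y => \sum_(i < m.+1) ('C(m, i))%:R * (dn i f y * dn (m - i)%N g y).
Proof.
move=> hf hg; elim: m => [|m IH].
  by apply/funext => y; rewrite big_ord1 bin0 mul1r.
rewrite dnS' IH der1_sum; last first.
  move=> i x; apply: smooth_dbl; apply: smoothM; first exact: smoothC.
  by apply: smoothM; apply: smooth_dn.
apply/funext => y; rewrite -(pascal (fun i => dn i f y) (fun j => dn j g y)); apply: eq_bigr => i _.
rewrite /= derive1E deriveMl; last first.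
  by apply: smooth_dbl; apply: smoothM; apply: smooth_dn.
rewrite -derive1E der1M; try by apply: smooth_dbl; apply: smooth_dn.
by congr (_ * (_ + _)); rewrite mulrC.
Qed.
End Scal2.

Section Mx.
Variable R : realType.

Lemma mxdnE p q k (A : R -> 'M[R]_(p, q)) x i j :
  mxdn k A x i j = dn k (fun y => A y i j) x.
Proof. by rewrite mxE. Qed.

Lemma mxentE p q (A : 'M[R]_(p, q)) (i : 'I_p) (j : 'I_q) : mxent A i j = A i j.
Proof. by rewrite /mxent !valK. Qed.

Lemma smooth_mxent p q (A : R -> 'M[R]_(p, q)) a b :
  mx_smooth A -> smooth (fun x => mxent (A x) a b).
Proof.
move=> hA; rewrite /mxent; case: insub => [i|]; last exact: smoothC.
by case: insub => [j|]; [exact: hA | exact: smoothC].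
Qed.

Lemma mxs_cst p q (A : 'M[R]_(p, q)) : mx_smooth (fun _ => A).
Proof. by move=> i j; exact: smoothC. Qed.

Lemma mxs_add p q (A B : R -> 'M[R]_(p, q)) :
  mx_smooth A -> mx_smooth B -> mx_smooth (fun x => A x + B x).
Proof.
move=> hA hB i j; under eq_fun do rewrite mxE; exact: smoothD.
Qed.

Lemma mxs_opp p q (A : R -> 'M[R]_(p, q)) :
  mx_smooth A -> mx_smooth (fun x => - A x).
Proof. move=> hA i j; under eq_fun do rewrite mxE; exact: smoothN. Qed.

Lemma mxs_scale p q (c : R) (A : R -> 'M[R]_(p, q)) :
  mx_smooth A -> mx_smooth (fun x => c *: A x).
Proof.
move=> hA i j; under eq_fun do rewrite mxE; apply: smoothM => //; exact: smoothC.
Qed.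

Lemma mxs_mul p q r (A : R -> 'M[R]_(p, q)) (B : R -> 'M[R]_(q, r)) :
  mx_smooth A -> mx_smooth B -> mx_smooth (fun x => A x *m B x).
Proof.
move=> hA hB i j; under eq_fun do rewrite mxE.
by apply: smooth_sum => k; apply: smoothM.
Qed.

Lemma mxs_sum p q (I : Type) (r : seq I) (P : pred I) (F : I -> R -> 'M[R]_(p, q)) :
  (forall i, mx_smooth (F i)) -> mx_smooth (fun x => \sum_(i <- r | P i) F i x).
Proof.
move=> hF a b; under eq_fun do rewrite summxE.
by apply: smooth_sum => i; exact: hF.
Qed.

Lemma mxs_if p q (c : bool) (A : R -> 'M[R]_(p, q)) :
  mx_smooth A -> mx_smooth (fun x => if c then A x else 0).
Proof. by case: c => // _; exact: mxs_cst. Qed.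

Lemma mxs_dn p q k (A : R -> 'M[R]_(p, q)) : mx_smooth A -> mx_smooth (mxdn k A).
Proof.
move=> hA i j; under eq_fun do rewrite mxE; exact: smooth_dn.
Qed.

Lemma smooth_det n (A : R -> 'M[R]_n) : mx_smooth A -> smooth (fun x => \det (A x)).
Proof.
move=> hA; rewrite /determinant; apply: smooth_sum => s.
apply: smoothM; first exact: smoothC.
by apply: smooth_prod => i; exact: hA.
Qed.

Lemma mxs_inv n (A : R -> 'M[R]_n) : mx_smooth A -> (forall x, \det (A x) != 0) ->
  mx_smooth (fun x => invmx (A x)).
Proof.
move=> hA h0 i j.
have -> : (fun x => invmx (A x) i j) =
   fun x => (\det (A x))^-1 * ((-1) ^+ (j + i) * \det (row' j (col' i (A x)))).
  apply/funext => x; rewrite /invmx unitmxE unitfE h0 !mxE /cofactor //.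
apply: smoothM; first by apply: smoothV => //; exact: smooth_det.
apply: smoothM; first exact: smoothC.
by apply: smooth_det => a b; under eq_fun do rewrite !mxE; exact: hA.
Qed.
End Mx.

Section Mx2.
Variable R : realType.

Lemma mxdn_apply (N s m : nat) (ka : nat -> R -> 'M[R]_N) (f : R -> 'cV[R]_N) x :
  (forall n, mx_smooth (ka n)) -> mx_smooth f ->
  mxdn m (fun y => \sum_(n < s) ka n y *m mxdn n f y) x =
  \sum_(n < s) \sum_(i < m.+1) ('C(m, i))%:R *: (mxdn i (ka n) x *m mxdn (m + n - i) f x).
Proof.
move=> hk hf; apply/matrixP => a b; rewrite mxE.
have -> : (fun y => (\sum_(n < s) ka n y *m mxdn n f y) a b) =
   fun y => \sum_(n < s) \sum_(c < N) ka n y a c * dn n (fun z => f z c b) y.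
  apply/funext => y; rewrite summxE; apply: eq_bigr => n _; rewrite mxE.
  by apply: eq_bigr => c _; rewrite mxE.
rewrite dn_sum; last first.
  move=> n; apply: smooth_sum => c; apply: smoothM; first exact: hk.
  exact: smooth_dn.
rewrite summxE; apply: eq_bigr => n _.
rewrite dn_sum; last by move=> c; apply: smoothM; [exact: hk | exact: smooth_dn].
rewrite summxE.
under [RHS]eq_bigr => i _ do rewrite mxE [X in _ * X]mxE mulr_sumr.
rewrite exchange_big /=; apply: eq_bigr => c _.
rewrite dn_mul; [|exact: hk| exact: smooth_dn].
apply: eq_bigr => i _; rewrite !mxE dn_dn.
have hi := ltn_ord i.
by have -> : (m - i + n = m + n - i)%N by lia.
Qed.
End Mx2.

Lemma sum_ext_zero (V : zmodType) n1 n2 (F : nat -> V) : (n1 <= n2)%N ->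
  (forall k, (n1 <= k)%N -> (k < n2)%N -> F k = 0) ->
  \sum_(k < n1) F k = \sum_(k < n2) F k.
Proof.
move=> h12 hF; rewrite -!(big_mkord xpredT) (@big_cat_nat _ _ _ n1 0%N n2 _ _ (leq0n n1) h12) /=.
rewrite [X in _ = _ + X]big_nat_cond [X in _ = _ + X]big1 ?addr0 // => k /andP[/andP[h1 h2] _].
exact: hF.
Qed.

Lemma sum_ord_if (V : zmodType) T j (F : nat -> V) : (j < T)%N ->
  \sum_(k < T) (if (j == k)%N then F k else 0) = F j.
Proof.
move=> hj; rewrite (bigD1 (Ordinal hj)) //= eqxx big1 ?addr0 // => k hk.
case: eqP => // e; move/eqP: hk; case; apply: val_inj; by rewrite /= e.
Qed.

Section Modo.
Variable R : realType.
Variable N : nat.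
Implicit Types L Q K : modo R N.

Lemma coef_default L k : (size L <= k)%N -> coef L k = fun _ => 0.
Proof. by move=> h; rewrite /coef nth_default. Qed.

Lemma apply_trunc L f x n : (forall k, (n <= k)%N -> coef L k x = 0) ->
  modo_apply L f x = \sum_(k < n) coef L k x *m mxdn k f x.
Proof.
move=> h; rewrite /modo_apply (@sum_ext_zero _ _ (size L + n)
   (fun k => coef L k x *m mxdn k f x)) ?leq_addr //; last first.
  by move=> k hk _; rewrite coef_default // mul0mx.
rewrite [RHS](@sum_ext_zero _ n (size L + n) (fun k => coef L k x *m mxdn k f x)) ?leq_addl //.
by move=> k hk _; rewrite h // mul0mx.
Qed.

Lemma dn_zero m : dn m (fun _ : R => 0 : R) = fun _ => 0.
Proof. by elim: m => [|m IH] //; rewrite dnS' IH der1C. Qed.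

Lemma mxdn_zero p q m x : mxdn m (fun _ : R => 0 : 'M[R]_(p, q)) x = 0.
Proof.
apply/matrixP => i j; rewrite !mxE.
by rewrite dn_zero.
Qed.

Definition mulc K b (q : nat -> R -> 'M[R]_N) k x :=
  \sum_(m < b) \sum_(n < size K) \sum_(i < m.+1)
     if (m + n - i == k)%N then ('C(m, i))%:R *: (q m x *m mxdn i (coef K n) x) else 0.

Lemma size_mmul Q K : size (modo_mul Q K) = (size Q + size K)%N.
Proof. by rewrite size_mkseq. Qed.

Lemma coef_mul Q K k x : (k < size Q + size K)%N ->
  coef (modo_mul Q K) k x = mulc K (size Q) (coef Q) k x.
Proof. by move=> h; rewrite /coef nth_mkseq. Qed.

Lemma apply_mul Q K f x : modo_smooth K -> mx_smooth f ->
  modo_apply (modo_mul Q K) f x =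
  \sum_(m < size Q) coef Q m x *m mxdn m (modo_apply K f) x.
Proof.
move=> hK hf; rewrite {1}/modo_apply size_mmul.
under eq_bigr => k _ do rewrite coef_mul // /mulc mulmx_suml.
rewrite [LHS]exchange_big; apply: eq_bigr => m _.
rewrite /modo_apply mxdn_apply //.
under eq_bigr => k _ do rewrite mulmx_suml.
rewrite mulmx_sumr [LHS]exchange_big; apply: eq_bigr => n _.
under eq_bigr => k _ do rewrite mulmx_suml.
rewrite mulmx_sumr [LHS]exchange_big; apply: eq_bigr => i _ /=.
have hlt : (m + n - i < size Q + size K)%N.
  by have := ltn_ord m; have := ltn_ord n; lia.
under eq_bigr => k _ do rewrite (fun_if (fun A => A *m mxdn k f x)) mul0mx.
rewrite (sum_ord_if (fun k => ('C(m, i))%:R *: (coef Q m x *m mxdn i (coef K n) x) *m mxdn k f x) hlt).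
by rewrite -scalemxAl -scalemxAr mulmxA.
Qed.
End Modo.
Unset Implicit Arguments.

Lemma reindex_nat (V : nmodType) M N (F : nat -> nat -> V) : (0 < N)%N ->
  \sum_(0 <= r < (M * N)%N) F (r %/ N)%N (r %% N)%N = \sum_(0 <= j < M) \sum_(0 <= b < N) F j b.
Proof.
move=> hN; elim: M => [|M IH]; first by rewrite mul0n !big_geq.
rewrite mulSnr (@big_cat_nat _ _ _ ((M * N)%N) 0 ((M * N + N)%N)) ?leq_addr // IH big_nat_recr //=.
congr (_ + _).
rewrite -{1}(add0n ((M * N)%N)) big_addn addKn; apply: eq_big_nat => b /andP[_ hb].
by rewrite addnC divnMDl // modnMDl divn_small // modn_small // addn0.
Qed.

Lemma reindex_ord (V : nmodType) M N (F : nat -> nat -> V) : (0 < N)%N ->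
  \sum_(r < (M * N)%N) F (r %/ N)%N (r %% N)%N = \sum_(j < M) \sum_(b < N) F j b.
Proof.
move=> hN; rewrite -(@big_mkord _ _ _ ((M * N)%N) (fun _ => true) (fun r => F (r %/ N)%N (r %% N)%N)).
rewrite reindex_nat // big_mkord; apply: eq_bigr => j _; by rewrite big_mkord.
Qed.

Lemma smooth_ext (R : realType) (f g : R -> R) : (forall x, f x = g x) -> smooth g -> smooth f.
Proof. by move=> h; have -> : f = g by apply/funext. Qed.

Lemma mxentE0 (R : realType) p (A : 'M[R]_(p, 1)) (i : 'I_p) : mxent A i 0%N = A i 0.
Proof. exact: (mxentE A i 0). Qed.

Section Wr.
Variables (R : realType) (M N : nat).
Hypothesis hN : (0 < N)%N.
Variable phi : 'I_(M * N) -> R -> 'cV[R]_N.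
Hypothesis hphi : forall i, mx_smooth (phi i).
Hypothesis hdet : forall x, \det (wronsk phi x) != 0.

Lemma W_unit x : wronsk phi x \in unitmx.
Proof. by rewrite unitmxE unitfE hdet. Qed.

Lemma W_smooth : mx_smooth (wronsk phi).
Proof.
move=> r i; under eq_fun do rewrite mxE.
by apply: smooth_mxent; apply: mxs_dn.
Qed.

Lemma top_smooth : mx_smooth (wronsk_top phi).
Proof.
move=> a i; apply: (@smooth_ext _ _ (fun y => mxdn M (phi i) y a 0)).
  by move=> y; rewrite mxE.
exact: (mxs_dn (hphi i)).
Qed.

Lemma C_smooth j : mx_smooth (Ccoef phi j).
Proof.
move=> a b; under eq_fun do rewrite mxE.
apply: smooth_mxent; apply: mxs_mul; first exact: top_smooth.
apply: mxs_inv => //; exact: W_smooth.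
Qed.

Lemma size_K : size (Kop phi) = M.+1.
Proof. by rewrite size_rcons size_mkseq. Qed.

Lemma coef_Kop k : coef (Kop phi) k =
  if (k < M)%N then (fun x => - Ccoef phi k x)
  else if (k == M)%N then (fun _ => 1%:M) else (fun _ => 0).
Proof.
rewrite /coef /Kop nth_rcons size_mkseq.
by case: ltnP => h //; rewrite nth_mkseq.
Qed.

Lemma K_smooth : modo_smooth (Kop phi).
Proof.
move=> k; rewrite coef_Kop; case: ifP => _; first by apply: mxs_opp; exact: C_smooth.
by case: ifP => _; exact: mxs_cst.
Qed.

Lemma K_monic : monic_of_order M (Kop phi).
Proof.
split => [x|i x hi]; first by rewrite coef_Kop ltnn eqxx.
by rewrite coef_Kop ltnNge (ltnW hi) /= gtn_eqF.
Qed.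

Lemma core x (D : nat -> 'M[R]_N) :
  (forall i, \sum_(j < M) D j *m mxdn j (phi i) x = 0) ->
  forall j, (j < M)%N -> D j = 0.
Proof.
move=> hD.
pose Dm : 'M[R]_(N, M * N) := \matrix_(a, r) mxent (D (r %/ N)%N) a (r %% N)%N.
have hDW : Dm *m wronsk phi x = 0.
  apply/matrixP => a i; rewrite !mxE.
  under eq_bigr => r _ do rewrite !mxE.
  rewrite (@reindex_ord _ M N (fun j b => mxent (D j) a b * mxent (mxdn j (phi i) x) b 0)) //.
  move/matrixP: (hD i) => /(_ a 0); rewrite summxE mxE => h; rewrite -[RHS]h.
  apply: eq_bigr => j _; rewrite mxE; apply: eq_bigr => b _.
  by rewrite mxentE mxentE0.
have hD0 : Dm = 0 by rewrite -(mulmxK (W_unit x) Dm) hDW mul0mx.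
move=> j hj; apply/matrixP => a b.
have hr : (j * N + b < M * N)%N.
  by have := ltn_ord b; nia.
move/matrixP: hD0 => /(_ a (Ordinal hr)); rewrite !mxE /=.
by rewrite divnMDl // modnMDl divn_small // modn_small // addn0 mxentE.
Qed.

Lemma C_sum x (i : 'I_(M * N)) :
  \sum_(k < M) Ccoef phi k x *m mxdn k (phi i) x = mxdn M (phi i) x.
Proof.
apply/matrixP => a b; rewrite (ord1 b) summxE.
under eq_bigr => k _ do rewrite mxE.
set P := wronsk_top phi x *m invmx (wronsk phi x).
have -> : \sum_(k < M) \sum_(c < N) Ccoef phi k x a c * mxdn k (phi i) x c 0 =
  \sum_(k < M) \sum_(c < N) (fun j c => mxent P a (j * N + c)%N * mxent (mxdn j (phi i) x) c 0) k c.
  by apply: eq_bigr => k _; apply: eq_bigr => c _; rewrite mxentE0 mxE.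
rewrite -(@reindex_ord _ M N (fun j c => mxent P a (j * N + c)%N * mxent (mxdn j (phi i) x) c 0)) //=.
have -> : mxdn M (phi i) x a 0 = (P *m wronsk phi x) a i.
  by rewrite /P (mulmxKV (W_unit x)) !mxE.
rewrite mxE; apply: eq_bigr => r _.
by rewrite [wronsk phi x r i]mxE -divn_eq mxentE.
Qed.

Lemma K_annih i x : modo_apply (Kop phi) (phi i) x = 0.
Proof.
rewrite /modo_apply size_K big_ord_recr /= coef_Kop ltnn eqxx mul1mx.
have -> : \sum_(k < M) coef (Kop phi) k x *m mxdn k (phi i) x =
   - \sum_(k < M) Ccoef phi k x *m mxdn k (phi i) x.
  rewrite -sumrN; apply: eq_bigr => k _; by rewrite coef_Kop ltn_ord mulNmx.
by rewrite C_sum addNr.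
Qed.
End Wr.

Section Div.
Variables (R : realType) (N M : nat) (K : modo R N).
Hypothesis hsK : size K = M.+1.
Hypothesis hKM : forall x, coef K M x = 1%:M.
Hypothesis hKs : modo_smooth K.

Lemma mulc_add b q1 q2 k x :
  mulc K b (fun m y => q1 m y + q2 m y) k x = mulc K b q1 k x + mulc K b q2 k x.
Proof.
rewrite /mulc -big_split; apply: eq_bigr => m _; rewrite -big_split.
apply: eq_bigr => n _; rewrite -big_split; apply: eq_bigr => i _.
case: ifP => _ /=; last by rewrite addr0.
by rewrite mulmxDl scalerDr.
Qed.

Lemma mulc_ext b c q k x : (forall m y, (c <= m)%N -> q m y = 0) -> (c <= b)%N ->
  mulc K b q k x = mulc K c q k x.
Proof.
move=> hq hcb; rewrite /mulc; symmetry.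
apply: (@sum_ext_zero _ c b (fun m => \sum_(n < size K) \sum_(i < m.+1)
   (if (m + n - i == k)%N then ('C(m, i))%:R *: (q m x *m mxdn i (coef K n) x) else 0))) => //.
move=> m hm _; apply: big1 => n _; apply: big1 => i _.
by rewrite hq // mul0mx scaler0; case: ifP.
Qed.

Lemma mulc_zero b k x : mulc K b (fun _ _ => 0) k x = 0.
Proof.
rewrite /mulc; apply: big1 => m _; apply: big1 => n _; apply: big1 => i _.
by rewrite mul0mx scaler0; case: ifP.
Qed.

Lemma mulc_smooth b q k : (forall m, mx_smooth (q m)) -> mx_smooth (mulc K b q k).
Proof.
move=> hq; rewrite /mulc.
apply: mxs_sum => m; apply: mxs_sum => n; apply: mxs_sum => i.
apply: mxs_if; apply: mxs_scale; apply: mxs_mul; first exact: hq.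
apply: mxs_dn; exact: hKs.
Qed.

Definition mono d (a : R -> 'M[R]_N) : nat -> R -> 'M[R]_N :=
  fun m y => if (m == d)%N then a y else 0.

Lemma mulc_mono_big d a k x : (d + M < k)%N -> mulc K d.+1 (mono d a) k x = 0.
Proof.
move=> hk; rewrite /mulc; apply: big1 => m _; apply: big1 => n _; apply: big1 => i _.
rewrite ifF //; apply/negbTE; have hm := ltn_ord m.
have hn : (n < M.+1)%N by rewrite -hsK.
apply/eqP; lia.
Qed.

Lemma mxdn0 p q (A : R -> 'M[R]_(p, q)) x : mxdn 0 A x = A x.
Proof. by apply/matrixP => i j; rewrite mxE. Qed.

Lemma mulc_mono_top d a x : mulc K d.+1 (mono d a) (d + M) x = a x.
Proof.
rewrite /mulc big_ord_recr /= big1 ?add0r; last first.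
  move=> m _; apply: big1 => n _; apply: big1 => i _.
  by rewrite /mono (ltn_eqF (ltn_ord m)) mul0mx scaler0; case: ifP.
rewrite /mono eqxx.
have hMs : (M < size K)%N by rewrite hsK.
rewrite (bigD1 (Ordinal hMs)) //= [X in _ + X]big1 ?addr0; last first.
  move=> n hn; apply: big1 => i _; rewrite ifF //; apply/negbTE.
  have hn' : (n != M :> nat) by apply: contra hn => /eqP e; apply/eqP/val_inj.
  have hnM : (n < M.+1)%N by rewrite -hsK.
  apply/eqP; lia.
rewrite big_ord_recl /= subn0 eqxx bin0 scale1r mxdn0 hKM mulmx1 big1 ?addr0 //.
move=> i _; rewrite ifF //; apply/negbTE; have := ltn_ord i => hi.
rewrite /bump /=; apply/eqP; lia.
Qed.


Lemma zero_case s (al : nat -> R -> 'M[R]_N) : (s <= M)%N ->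
  (forall k x, (s <= k)%N -> al k x = 0) ->
  exists q : nat -> R -> 'M[R]_N, (forall m, mx_smooth (q m)) /\
    (forall m x, (s - M <= m)%N -> q m x = 0) /\
    (forall b k x, (s - M <= b)%N -> (M <= k)%N -> mulc K b q k x = al k x).
Proof.
move=> hs h0; exists (fun _ _ => 0); split; first by move=> m; exact: mxs_cst.
split => // b k x _ hk; rewrite mulc_zero h0 //; exact: leq_trans hk.
Qed.

Lemma exist_q s : forall al : nat -> R -> 'M[R]_N, (forall k, mx_smooth (al k)) ->
  (forall k x, (s <= k)%N -> al k x = 0) ->
  exists q : nat -> R -> 'M[R]_N, (forall m, mx_smooth (q m)) /\
    (forall m x, (s - M <= m)%N -> q m x = 0) /\
    (forall b k x, (s - M <= b)%N -> (M <= k)%N -> mulc K b q k x = al k x).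
Proof.
elim: s => [|s IH] al hs h0; first exact: zero_case.
case: (ltnP s M) => hsM; first exact: zero_case.
pose d := (s - M)%N.
have hds : (d + M)%N = s by rewrite /d subnK.
pose de := mono d (al s).
pose al' := fun k y => al k y - mulc K d.+1 de k y.
have hde : forall m, mx_smooth (de m) by move=> m; apply: mxs_if; exact: hs.
have hal' : forall k, mx_smooth (al' k).
  move=> k; apply: mxs_add; first exact: hs.
  by apply: mxs_opp; apply: mulc_smooth.
have h0' : forall k x, (s <= k)%N -> al' k x = 0.
  move=> k x; rewrite leq_eqVlt => /orP[/eqP <-|hk].
    by rewrite /al' -{2}hds mulc_mono_top subrr.
  by rewrite /al' h0 // mulc_mono_big ?subrr // hds.
have [q' [hq's [hq'0 hq'm]]] := IH al' hal' h0'.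
exists (fun m y => q' m y + de m y); split.
  by move=> m; apply: mxs_add.
have hsd : (s.+1 - M)%N = d.+1 by rewrite subSn.
rewrite hsd; split.
  move=> m x hm; rewrite hq'0 /de /mono; last by rewrite -/d; exact: ltnW.
  by rewrite ifF ?addr0 //; apply/negbTE; rewrite neq_ltn hm orbT.
move=> b k x hb hk; rewrite mulc_add hq'm //; last by rewrite -/d; exact: ltnW.
rewrite (mulc_ext b d.+1 de k x) // /al' ?subrK //.
by move=> m y hm; rewrite /de /mono ifF //; apply/negbTE; rewrite neq_ltn hm orbT.
Qed.
End Div.

Theorem theorem2 (R : realType) (M N : nat) (hM : (1 <= M)%N) (hN : (1 <= N)%N)
  (phi : 'I_(M * N) -> R -> 'cV[R]_N)
  (hphi : forall i, mx_smooth (phi i))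
  (hdet : forall x, \det (wronsk phi x) != 0) :
  (modo_smooth (Kop phi) /\ monic_of_order M (Kop phi) /\
   (forall i x, modo_apply (Kop phi) (phi i) x = 0) /\
   (forall K' : modo R N, modo_smooth K' -> monic_of_order M K' ->
      (forall i x, modo_apply K' (phi i) x = 0) -> modo_eq K' (Kop phi)))
  /\
  (forall L : modo R N, modo_smooth L ->
     (forall i x, modo_apply L (phi i) x = 0) ->
     exists Q : modo R N, modo_smooth Q /\ modo_eq L (modo_mul Q (Kop phi))).
Proof.
have KA := @K_annih R M N hN phi hdet.
have Ksm := @K_smooth R M N phi hphi hdet.
have [Km1 Km0] := @K_monic R M N phi.
have sK := @size_K R M N phi.
have core' := @core R M N hN phi hdet.
set K := Kop phi in KA Ksm Km1 Km0 sK *.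
have KA0 : forall i, modo_apply K (phi i) = fun _ => 0.
  by move=> i; apply/funext => y; exact: KA.
split.
  do 3! (split => //).
  move=> K' hK's [hK'1 hK'0] hK'a k x.
  case: (ltnP k M) => hk; last first.
    case: (eqVneq k M) => [->|hne]; first by rewrite hK'1 Km1.
    have hk' : (M < k)%N by rewrite ltn_neqAle eq_sym hne hk.
    by rewrite hK'0 // Km0.
  apply/eqP; rewrite -subr_eq0; apply/eqP.
  apply: (core' x (fun j => coef K' j x - coef K j x)) => // i0.
  have t1 : forall j, (M.+1 <= j)%N -> coef K' j x = 0 by move=> j hj; exact: hK'0.
  have t2 : forall j, (M.+1 <= j)%N -> coef K j x = 0 by move=> j hj; exact: Km0.
  have e : \sum_(j < M.+1) (coef K' j x - coef K j x) *m mxdn j (phi i0) x = 0.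
    rewrite (eq_bigr (fun j : 'I_M.+1 => coef K' j x *m mxdn j (phi i0) x - coef K j x *m mxdn j (phi i0) x)); last by move=> j _; rewrite mulmxBl.
    by rewrite sumrB -(apply_trunc _ t1) -(apply_trunc _ t2) hK'a KA subrr.
  by move: e; rewrite big_ord_recr /= hK'1 Km1 subrr mul0mx addr0.
move=> L hLs hLa.
have hL0 : forall k x, (size L <= k)%N -> coef L k x = 0.
  by move=> k x hk; rewrite coef_default.
have [q [hqs [hq0 hqm]]] := @exist_q R N M K sK Km1 Ksm (size L) (coef L) hLs hL0.
pose d := (size L - M)%N.
pose Q := mkseq q d.
have cQ : coef Q = q.
  apply/funext => m; apply/funext => y; rewrite /coef /Q.
  case: (ltnP m d) => h; first by rewrite nth_mkseq.
  by rewrite nth_default ?size_mkseq // hq0.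
have sQ : size Q = d by rewrite size_mkseq.
exists Q; split; first by move=> m; rewrite cQ.
move=> k x.
have hsL : (size L <= d + M)%N by rewrite /d; lia.
have hhi : forall j, (M <= j)%N -> coef L j x = coef (modo_mul Q K) j x.
  move=> j hj; case: (ltnP j (size Q + size K)) => hj'.
    by rewrite coef_mul // sQ cQ hqm.
  have -> : coef (modo_mul Q K) j = fun _ => 0 by rewrite coef_default // size_mmul.
  rewrite hL0 //.
  by apply: leq_trans hj'; rewrite sQ sK addnS; exact: leqW.
case: (ltnP k M) => hk; last exact: hhi.
apply/eqP; rewrite -subr_eq0; apply/eqP.
apply: (core' x (fun j => coef L j x - coef (modo_mul Q K) j x)) => // i0.
pose T := (d + M.+1)%N.
have t1 : forall j, (T <= j)%N -> coef L j x = 0.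
  by move=> j hj; apply: hL0; apply: leq_trans hj; rewrite /T addnS; exact: leqW.
have t2 : forall j, (T <= j)%N -> coef (modo_mul Q K) j x = 0.
  by move=> j hj; rewrite coef_default // size_mmul sQ sK.
have e : \sum_(j < T) (coef L j x - coef (modo_mul Q K) j x) *m mxdn j (phi i0) x = 0.
  rewrite (eq_bigr (fun j : 'I_T => coef L j x *m mxdn j (phi i0) x - coef (modo_mul Q K) j x *m mxdn j (phi i0) x)); last by move=> j _; rewrite mulmxBl.
  rewrite sumrB -(apply_trunc _ t1) -(apply_trunc _ t2) hLa apply_mul // KA0.
  by rewrite big1 ?subrr // => m _; rewrite mxdn_zero mulmx0.
rewrite (@sum_ext_zero _ M T (fun j => (coef L j x - coef (modo_mul Q K) j x) *m mxdn j (phi i0) x)) //.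
  by rewrite /T; lia.
by move=> j hj _; rewrite hhi // subrr mul0mx.
Qed.
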